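(* Let $\langle\eta\rangle:=B_1/(\xi_L,\xi)$, where $B_1=\langle\eta,\xi,\xi_L\rangle$. Then $HH^n_{(1-n)}(B,\langle\eta\rangle)\cong k$ for $n\in\{1,2\}$ and $0$ otherwise; $HH^n_{(2-n)}(B,\langle\eta\rangle)\cong k$ for $n\in\{5,6\}$ and $0$ otherwise; $HH^n_{(3-n)}(B,\langle\eta\rangle)\cong k$ for $n\in\{9,10\}$ and $0$ otherwise; $HH^n_{(4-n)}(B,\langle\eta\rangle)\cong k$ for $n\in\{13,14\}$ and $0$ otherwise.
   Context: Let $k$ be a field with $\operatorname{char}k\neq2,3$. Let $B$ be the graded $k$-algebra with $k$-basis $\mathrm{id}_L,\mathrm{id}_{\mathcal O},\theta$ (degree $0$) and $\eta,\xi,\xi_L$ (degree $1$), whose only nonzero products of basis elements are $\mathrm{id}_L\mathrm{id}_L=\mathrm{id}_L$, $\mathrm{id}_{\mathcal O}\mathrm{id}_{\mathcal O}=\mathrm{id}_{\mathcal O}$, $\mathrm{id}_L\xi_L=\xi_L\mathrm{id}_L=\xi_L$, $\mathrm{id}_{\mathcal O}\xi=\xi\mathrm{id}_{\mathcal O}=\xi$, $\mathrm{id}_L\eta=\eta\,\mathrm{id}_{\mathcal O}=\eta$, $\mathrm{id}_{\mathcal O}\theta=\theta\,\mathrm{id}_L=\theta$, $\theta\eta=\xi$, $\eta\theta=\xi_L$. Let $R=k\langle\mathrm{id}_L,\mathrm{id}_{\mathcal O}\rangle$, $B_+=\langle\theta,\eta,\xi,\xi_L\rangle$, $B=R\oplus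 B_+$; tensor products are over $R$. $B_1=\langle\eta,\xi,\xi_L\rangle$ and $(\xi_L,\xi)=\langle\xi_L,\xi\rangle$ are sub-bimodules of $B$. For a graded $B$-bimodule $M$, the reduced Hochschild complex is $C^n(B,M)=\operatorname{Hom}_{R\text{-}R}(B_+^{\otimes_R n},M)$ with $\delta(\phi)(a_0,\dots,a_n)=a_0\phi(a_1,\dots,a_n)+\sum_{i=1}^n(-1)^i\phi(a_0,\dots,a_{i-1}a_i,\dots,a_n)+(-1)^{n+1}\phi(a_0,\dots,a_{n-1})a_n$; $HH^n_{(m)}(B,M)$ is the cohomology of the subcomplex of cochains homogeneous of internal degree $m$ ($\deg\phi(x)=\deg x+m$). *)

(* Defs.v *)
From HB Require Import structures.
From mathcomp Require Import all_boot all_order all_algebra.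
Set Implicit Arguments. Unset Strict Implicit. Unset Printing Implicit Defensive.
Import Order.TTheory GRing.Theory Num.Theory.
Local Open Scope ring_scope.

(* k-basis of B: id_L, id_O, theta (degree 0); eta, xi, xi_L (degree 1). *)
Inductive bas := idL | idO | th | et | xi | xiL.

Definition bas2o (b : bas) : nat :=
  match b with idL => 0 | idO => 1 | th => 2 | et => 3 | xi => 4 | xiL => 5 end%N.
Definition o2bas (n : nat) : option bas :=
  match n with 0 => Some idL | 1 => Some idO | 2 => Some th | 3 => Some et
             | 4 => Some xi | 5 => Some xiL | _ => None end%N.
Lemma bas2oK : pcancel bas2o o2bas. Proof. by case. Qed.
HB.instance Definition _ := Countable.copy bas (pcan_type bas2oK).
Definition bas_enum := [:: idL; idO; th; et; xi; xiL].
Lemma bas_enumP : Finite.axiom bas_enum. Proof. by case. Qed.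
HB.instance Definition _ := isFinite.Build bas bas_enumP.

Definition degb (b : bas) : nat :=
  match b with idL | idO | th => 0 | et | xi | xiL => 1 end%N.

(* product of basis elements: [Some c] if the product is the basis element c,
   [None] if it is 0 (these are the only nonzero products listed). *)
Definition mulb (a b : bas) : option bas :=
  match a, b with
  | idL, idL => Some idL
  | idO, idO => Some idO
  | idL, xiL => Some xiL | xiL, idL => Some xiL
  | idO, xi => Some xi   | xi, idO => Some xi
  | idL, et => Some et   | et, idO => Some et
  | idO, th => Some th   | th, idL => Some th
  | th, et => Some xi
  | et, th => Some xiL
  | _, _ => None
  end.

(* R = k<id_L, id_O>: vertices / idempotents *)
Inductive vx := VL | VO.
Definition vx2b (v : vx) : bool := if v is VL then true else false.
Definition b2vx (b : bool) : vx := if b then VL else VO.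
Lemma vx2bK : cancel vx2b b2vx. Proof. by case. Qed.
HB.instance Definition _ := Finite.copy vx (can_type vx2bK).
Definition idem (v : vx) : bas := if v is VL then idL else idO.

Definition Bplus : pred bas := fun b => b \in [:: th; et; xi; xiL].
Definition bpT := {b : bas | Bplus b}.

Definition lft (a : bpT) : vx :=
  if mulb idL (val a) == Some (val a) then VL else VO.
Definition rgt (a : bpT) : vx :=
  if mulb (val a) idL == Some (val a) then VL else VO.

(* B_1 = <eta, xi, xi_L>; since (xi_L, xi) = <xi_L, xi> the quotient is the
   one-dimensional space k.eta; an element of it is given by its eta-coordinate
   (an element of k).  The bimodule action is the multiplication of B followed
   by taking the eta-coordinate (i.e. reducing modulo <xi_L, xi>). *)
Section Module.
Variable k : fieldType.

Definition etacoef (o : option bas) : k := if o == Some et then 1 else 0.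
Definition actL (b : bas) (x : k) : k := x * etacoef (mulb b et).
Definition actR (x : k) (b : bas) : k := x * etacoef (mulb et b).
Definition degM : nat := degb et.

(* A k-basis of B_+^{(x)_R n} is given by the elements e.a_1 (x) ... (x) a_n
   with e an idempotent of R, a_i basis elements of B_+, e a_1 = a_1 and
   a_i a_{i+1} composable (for n = 0 these are the idempotents e of R).
   We index them by pairs (e, (a_1,...,a_n)).  An R-R-bimodule map is
   determined by its values on this basis; a cochain is the function of
   those values (values at non-composable indices are forced to be 0). *)
Definition pathT n := (vx * n.-tuple bpT)%type.
Definition cochain n := {ffun pathT n -> k^o}.

Definition composable n (p : pathT n) : bool :=
  let: (v, t) := p in
  if val t is a :: s then (lft a == v) && path (fun a b => rgt a == lft b) a s
  else true.
Definition endv n (p : pathT n) : vx := last p.1 [seq rgt a | a <- val p.2].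
Definition degp n (p : pathT n) : nat := \sum_(a <- val p.2) degb (val a).

(* the index p can carry a nonzero value of an R-R-bimodule map homogeneous of
   internal degree m: p is a basis element, e_start M e_end <> 0 and
   M is nonzero in degree deg p + m *)
Definition admissible (m : int) n (p : pathT n) : bool :=
  [&& composable p,
      actR (actL (idem p.1) 1) (idem (endv p)) == 1 &
      (degp p)%:Z + m == (degM)%:Z].

Definition projC (m : int) n (phi : cochain n) : cochain n :=
  [ffun p => if admissible m p then phi p else 0].
Definition Cspace (m : int) n : {vspace cochain n} := limg (linfun (@projC m n)).

(* value of phi on e.(a_1 (x) ... (x) a_n), given as a sequence (0 if the
   length is wrong) *)
Definition evs n (phi : cochain n) (v : vx) (s : seq bpT) : k :=
  oapp (fun t : n.-tuple bpT => phi (v, t)) 0 (insub s).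

Definition mulbp (a b : bpT) : option bpT :=
  obind (fun c => insub c) (mulb (val a) (val b)).

(* the Hochschild differential, evaluated on e.(a_0 (x) ... (x) a_n) :
   a_0 phi(a_1..a_n) + sum_{i=1}^n (-1)^i phi(.., a_{i-1}a_i, ..)
   + (-1)^{n+1} phi(a_0..a_{n-1}) a_n,
   using phi(x) = sum_w phi(w.x) for the first term. *)
Definition rawd n (phi : cochain n) : cochain n.+1 :=
  [ffun p => let: (v, t) := p in
     let a0 := thead t in let s := val t in
     \sum_(w : vx) actL (val a0) (evs phi w (behead s))
     + \sum_(i < n) (-1) ^+ i.+1 *
          (if mulbp (nth a0 s i) (nth a0 s i.+1) is Some c
           then evs phi v (take i s ++ c :: drop i.+2 s) else 0)
     + (-1) ^+ n.+1 * actR (evs phi v (take n s)) (val (last a0 s))].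

Definition hdiff (m : int) n : 'Hom(cochain n, cochain n.+1) :=
  linfun (fun phi => projC m (rawd phi)).

Definition Zspace (m : int) n : {vspace cochain n} :=
  (Cspace m n :&: lker (hdiff m n))%VS.
Definition Bspace (m : int) n : {vspace cochain n} :=
  if n is n'.+1 then (hdiff m n' @: Cspace m n')%VS else 0%VS.

Definition HHdim (m : int) (n : nat) : nat := (\dim (Zspace m n) - \dim (Bspace m n))%N.

End Module.

(* Main.v *)
Require Import Defs.
From HB Require Import structures.
From mathcomp Require Import all_boot all_order all_algebra.
From mathcomp Require Import zify ring.
Import GRing.Theory.

Module C1.
Set Implicit Arguments. Unset Strict Implicit. Unset Printing Implicit Defensive.

Definition Th : bpT := exist _ th isT.
Definition Et : bpT := exist _ et isT.
Definition Xi : bpT := exist _ xi isT.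
Definition XiL : bpT := exist _ xiL isT.

Lemma bpT_cases (a : bpT) : [\/ a = Th, a = Et, a = Xi | a = XiL].
Proof. case: a => [[] pa] //; [constructor 1|constructor 2|constructor 3|constructor 4]; exact: val_inj. Qed.

Ltac bcase a := have [->|->|->|->] := bpT_cases a.
Ltac comp := rewrite /mulbp /= ?insubT.

Definition big (a : bpT) : bool := (val a == xi) || (val a == xiL).
Definition sm (v : vx) : bpT := if v is VL then Et else Th.
Definition bg (v : vx) : bpT := if v is VL then XiL else Xi.
Definition flip (v : vx) := if v is VL then VO else VL.
Definition sp1 (a : bpT) : bpT := if val a == xi then Th else Et.
Definition sp2 (a : bpT) : bpT := if val a == xi then Et else Th.

Lemma mul_big_l a b : big a -> mulbp a b = None.
Proof. by bcase a; bcase b; comp. Qed.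
Lemma mul_big_r a b : big b -> mulbp a b = None.
Proof. by bcase a; bcase b; comp. Qed.
Lemma mul_some a b c : mulbp a b = Some c ->
  [/\ big c, ~~ big a, ~~ big b, lft c = lft a & [/\ rgt c = rgt b, rgt a = lft b &
      degb (val c) = (degb (val a) + degb (val b))%N]].
Proof. by bcase a; bcase b; comp => // -[<-]. Qed.
Lemma spl_mul a : big a -> mulbp (sp1 a) (sp2 a) = Some a.
Proof. by bcase a; comp. Qed.
Lemma spl_small a : ~~ big (sp1 a) /\ ~~ big (sp2 a).
Proof. by bcase a. Qed.
Lemma small_pair x y : ~~ big x -> ~~ big y -> rgt x = lft y ->
  exists c, [/\ mulbp x y = Some c, sp1 c = x & sp2 c = y].
Proof. by bcase x; bcase y; comp => // _ _ _; eexists. Qed.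

Fixpoint mg (s : seq bpT) (i : nat) {struct s} : option (seq bpT) :=
  match s with
  | a :: s' => match i with
     | 0 => if s' is b :: r then omap (fun c => c :: r) (mulbp a b) else None
     | i'.+1 => omap (cons a) (mg s' i') end
  | [::] => None end.

Lemma mg_size s i t : mg s i = Some t -> size t = (size s).-1 /\ i.+1 < size s.
Proof.
elim: s i t => [|a s IH] [|i] t //=.
  by case: s IH => [|b r] IH //=; case: mulbp => //= c [<-].
case E: (mg s i) => [t'|] //= [<-]; have [h1 h2] := IH _ _ E; rewrite /= h1; split => //.
by case: (size s) h2.
Qed.

Lemma mg0 s t : mg s 0 = Some t -> exists c r, t = c :: r /\ big c.
Proof.
case: s => [|a [|b r]] //=; case E: mulbp => [c|] //= [<-].
by have [? ? ? ? _] := mul_some E; exists c, r.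
Qed.

Lemma mg_big s i t : mg s i = Some t -> mg t i = None /\ (0 < i -> mg t i.-1 = None).
Proof.
elim: s i t => [|a s IH] [|i] t //=.
  clear IH; case: s => [|b r] //=; case E: mulbp => [c|] //= [<-]; split => //=.
  have [? ? ? ? _] := mul_some E.
  by case: r => //= b' r'; rewrite mul_big_l.
case E: (mg s i) => [t'|] //= [<-]; have [h1 h2] := IH _ _ E.
split; first by rewrite /= h1.
move=> _; case: i E h1 h2 => [|i] E h1 h2 /=.
  by have [c [r [-> hc]]] := mg0 E; rewrite mul_big_r.
by rewrite h2.
Qed.

Lemma mg_comm s i j : (i < j)%N ->
  obind (mg^~ j) (mg s i) = obind (mg^~ i) (mg s j.+1).
Proof.
elim: s i j => [|a s IH] [|i] [|j] //= lt.
- clear IH; case: s => [|b r] //=; case Eab: mulbp => [c|] //=.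
  + case: (mg r j) => [r'|] //=; by rewrite Eab.
  + case: (mg r j) => [r'|] //=; by rewrite Eab.
- have := IH i j lt; case: (mg s i) => [t|] /=; case: (mg s j.+1) => [t'|] //=;
  by [move=> -> | move=> <-].
Qed.

End C1.
Import C1.

Module C2.
Set Implicit Arguments. Unset Strict Implicit. Unset Printing Implicit Defensive.
Local Open Scope ring_scope.

Section Ring.
Variable R : pzRingType.

Lemma dsum0 M (G : nat -> nat -> R) :
  (forall i j, (i < j)%N -> (j < M)%N -> G i j = - G j.+1 i) ->
  (forall i j, (i < M.+1)%N -> (j < M)%N -> (j == i) || (j.+1 == i) -> G i j = 0) ->
  \sum_(i < M.+1) \sum_(j < M) G i j = 0.
Proof.
move=> Hs H0.
have E : forall i : 'I_M.+1, forall j : 'I_M, G i j =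
   (if (j.+1 < i)%N then G i j else 0) + (if (i < j)%N then G i j else 0).
  move=> i j; case: ifP => h1; case: ifP => h2; rewrite ?addr0 ?add0r //.
  + lia.
  + rewrite H0 //; apply/orP; move/negbT: h1; move/negbT: h2; rewrite -!leqNgt.
    case: (ltngtP j i) => //; try lia; by move=> ->; rewrite eqxx.
under eq_bigr => i _ do under eq_bigr => j _ do rewrite E.
under eq_bigr => i _ do rewrite big_split /=.
rewrite big_split /=.
rewrite [X in X + _]big_ord_recl [X in X + _ + _]big1 ?add0r; last by [].
rewrite [X in _ + X]big_ord_recr /= [X in _ + (_ + X)]big1 ?addr0; last first.
  by move=> j _; rewrite ltnNge (ltnW (ltn_ord j)).
have -> : \sum_(i < M) \sum_(j < M) (if (i < j)%N then G i j else 0)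
   = - \sum_(j < M) \sum_(i < M) (if (i < j)%N then G j.+1 i else 0).
  rewrite exchange_big /= -sumrN; apply: eq_bigr => j _; rewrite -sumrN.
  apply: eq_bigr => i _ /=; case: ifP => h; rewrite ?oppr0 //.
  by rewrite Hs // opprK.
apply/eqP; rewrite subr_eq0; apply/eqP.
apply: eq_bigr => i _; apply: eq_bigr => j _; by rewrite /bump /= add1n ltnS.
Qed.
End Ring.

Section Dseq.
Variable R : comPzRingType.

Definition Dseq (F : seq bpT -> R) (s : seq bpT) : R :=
  \sum_(i < (size s).-1) (-1) ^+ i.+1 * oapp F 0 (mg s i).

Lemma Dseq2 F s : Dseq (Dseq F) s = 0.
Proof.
rewrite /Dseq; case E: (size s) => [|[|M]] /=; try by rewrite big_ord0.
pose G i j := (-1) ^+ i.+1 * (-1) ^+ j.+1 * oapp F 0 (obind (mg^~ j) (mg s i)) : R.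
transitivity (\sum_(i < M.+1) \sum_(j < M) G i j).
  apply: eq_bigr => i _; case Em: (mg s i) => [t|] /=.
    have [st _] := mg_size Em; rewrite st E /= mulr_sumr; apply: eq_bigr => j _.
    by rewrite /G Em /= mulrA.
  by rewrite mulr0 big1 // => j _; rewrite /G Em /= mulr0.
apply: dsum0.
  move=> i j lt _; rewrite /G (mg_comm s lt) (exprS _ j.+1) mulN1r !mulNr opprK.
  by rewrite [(-1) ^+ i.+1 * _]mulrC.
move=> i j _ _ /orP[/eqP -> | /eqP <-]; rewrite /G; case Em: (mg s _) => [t|] //=;
  rewrite ?mulr0 //; have [h1 h2] := mg_big Em.
  by rewrite h1 mulr0.
by rewrite (h2 isT) mulr0.
Qed.
End Dseq.

End C2.
Import C2.

Module C3.
Set Implicit Arguments. Unset Strict Implicit. Unset Printing Implicit Defensive.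

Fixpoint cmpR (v : vx) (s : seq bpT) : bool :=
  if s is a :: s' then (lft a == v) && cmpR (rgt a) s' else true.
Fixpoint endR (v : vx) (s : seq bpT) : vx :=
  if s is a :: s' then endR (rgt a) s' else v.
Definition degs (s : seq bpT) : nat := \sum_(a <- s) degb (val a).

Lemma mg_pres s i t v : mg s i = Some t ->
  [/\ cmpR v t = cmpR v s, endR v t = endR v s & degs t = degs s].
Proof.
elim: s i t v => [|a s IH] [|i] t v //=.
  case: s IH => [|b r] IH //=; case E: mulbp => [c|] //= [<-].
  have [_ _ _ h1 [h2 h3 h4]] := mul_some E.
  rewrite /= h1 h2 h3 eqxx /degs !big_cons h4 addnA; split => //.
case E: (mg s i) => [t'|] //= [<-]; have [h1 h2 h3] := IH _ _ (rgt a) E.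
by rewrite /= h1 h2 /degs !big_cons -/(degs t') -/(degs s) h3.
Qed.

Lemma seq_ind2 (P : seq bpT -> Prop) : P [::] -> (forall x, P [:: x]) ->
  (forall x y r, P r -> P (x :: y :: r)) -> forall s, P s.
Proof.
move=> H0 H1 H2 s; suff: P s /\ (forall x, P (x :: s)) by case.
by elim: s => [|y r [IH1 IH2]]; split => // x; apply: H2.
Qed.

Fixpoint pref (s : seq bpT) : nat :=
  if s is x :: (y :: r) then (if ~~ big x && big y then (pref r).+1 else 0) else 0.
Fixpoint isU (s : seq bpT) : bool :=
  match s with
  | x :: r => if big x then true else (if r is y :: r' then big y && isU r' else false)
  | [::] => false end.
Fixpoint isW (s : seq bpT) : bool :=
  match s with
  | x :: y :: r => if big x then false else if big y then isW r else true
  | _ => false end.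
Fixpoint mu (s : seq bpT) : seq bpT :=
  match s with
  | x :: r => if big x then sp1 x :: sp2 x :: r
              else (if r is y :: r' then x :: y :: mu r' else s)
  | [::] => [::] end.
Fixpoint nu (s : seq bpT) : seq bpT :=
  match s with
  | x :: y :: r => if big x then s else if big y then x :: y :: nu r
                   else odflt x (mulbp x y) :: r
  | _ => s end.
Definition isK s := ~~ isU s && ~~ isW s.

Lemma sp1_big a : big (sp1 a) = false. Proof. by bcase a. Qed.
Lemma sp2_big a : big (sp2 a) = false. Proof. by bcase a. Qed.

Lemma mu_size s : isU s -> size (mu s) = (size s).+1.
Proof.
move: s; apply: seq_ind2 => //= [x|x y r IH]; first by case: ifP.
by case: ifP => //= _ /andP[_ /IH ->].
Qed.

Lemma mu_W s : isU s -> isW (mu s) /\ pref (mu s) = pref s.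
Proof.
move: s; apply: seq_ind2 => //= [x|x y r IH]; first by case: ifP => //= _; rewrite ?sp1_big ?sp2_big.
case: ifP => bx /=; first by rewrite ?sp1_big ?sp2_big.
by case/andP => by_ /IH [h1 h2]; rewrite bx by_ h1 h2.
Qed.

Lemma mg_mu s : isU s -> mg (mu s) (pref s).*2 = Some s.
Proof.
move: s; apply: seq_ind2 => //= [x|x y r IH]; first by case: ifP => //= bx; rewrite spl_mul.
case: ifP => bx /=; first by rewrite spl_mul.
by case/andP => by_ /IH h; rewrite by_ /= h.
Qed.

Lemma mu_key s j t : isU s -> j != (pref s).*2 -> mg (mu s) j = Some t ->
  ~~ isU t || (pref s < pref t)%N.
Proof.
move: s j t; apply: seq_ind2 => //= [x|x y r IH] j t.
  case: ifP => //= bx _; case: j => [|[|j]] //=.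
case: ifP => bx /=.
  move=> _; case: j => [|[|j]] //= _.
    case E: mulbp => [c|] //= [<-] /=; have [bc _ _ _ _] := mul_some E.
    by rewrite sp1_big bc orbT.
  rewrite -[X in omap (cons (sp2 x)) X]/(mg (y :: r) j).
  by case: (mg (y :: r) j) => [t'|] // [<-] /=; rewrite sp1_big sp2_big.
case/andP => by_ Ur; case: j => [|[|j]] //=.
- by rewrite mul_big_r.
- by case: (mu r) => //= ? ?; rewrite mul_big_l.
rewrite by_ /= doubleS !eqSS => hj; case E: (mg (mu r) j) => [t'|] //= [<-] /=.
by rewrite bx by_ /= ltnS; apply: IH hj E.
Qed.

Lemma nu_mu s : isU s -> nu (mu s) = s.
Proof.
move: s; apply: seq_ind2 => //= [x|x y r IH]; first by case: ifP => //= bx; rewrite ?sp1_big ?sp2_big spl_mul.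
case: ifP => bx /=; first by rewrite ?sp1_big ?sp2_big spl_mul.
by case/andP => by_ /IH h; rewrite bx by_ h.
Qed.

Lemma nu_W s v : cmpR v s -> isW s -> isU (nu s) /\ mu (nu s) = s.
Proof.
move: s v; apply: seq_ind2 => //= x y r IH v.
case/and3P => /eqP hx /eqP hy hr; case: ifP => bx //; case: ifP => by_ /=.
  by move/(IH _ hr) => [h1 h2]; rewrite bx by_ h1 h2.
move=> _; have [c [E h1 h2]] := small_pair (negbT bx) (negbT by_) (esym hy).
have [bc _] := mul_some E; by rewrite E /= bc h1 h2.
Qed.

Lemma UnW s : isU s -> ~~ isW s.
Proof.
move: s; apply: seq_ind2 => //= x y r IH; case: ifP => //= _.
by case/andP => -> /IH.
Qed.

Fixpoint crit (v : vx) (n : nat) : seq bpT :=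
  match n with 0 => [::] | 1 => [:: sm v]
  | n'.+2 => sm v :: bg (flip v) :: crit (flip v) n' end.

Lemma crit_ok n v : [/\ size (crit v n) = n, cmpR v (crit v n) & isK (crit v n)].
Proof.
elim/ltn_ind: n v => n IH v; case: n IH => [|[|n]] IH; first by [].
  by case: v.
have [h1 h2 h3] := IH n (leqW (leqnn n.+1)) (flip v).
split; first by rewrite /= h1.
  by move: h2; case: (v) => /= ->.
by move: h3; case: (v) => /=.
Qed.

Lemma crit_uniq s v : cmpR v s -> isK s -> s = crit v (size s).
Proof.
move: s v; apply: seq_ind2 => [//|x|x y r IH] v /=.
  move=> /andP[/eqP <- _]; rewrite /isK /=; case: ifP => //= bx _; by move: bx; bcase x.
rewrite /isK /=; case/and3P => /eqP hx /eqP hy hr; case: ifP => // bx.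
case: ifP => //= by_ /andP[hU hW].
have ex : x = sm v by move: bx hx; bcase x => //= _ <-.
have ey : y = bg (flip v) by subst x; move: by_ hy; bcase y => //= _; case: (v).
have ev : rgt y = flip v by rewrite ey; case: (v).
rewrite (IH _ hr); last by rewrite /isK hU hW.
by rewrite ev ex ey; have [-> _ _] := crit_ok (size r) (flip v).
Qed.

Lemma size_bound s v : cmpR v s -> (size s <= 2 * degs s + (v == VO))%N.
Proof.
elim: s v => [|a s IH] v //=; case/andP => /eqP <- /IH; rewrite /degs big_cons -/(degs s).
by bcase a => /=; lia.
Qed.

End C3.
Import C3.

Module C4.
Set Implicit Arguments. Unset Strict Implicit. Unset Printing Implicit Defensive.
Local Open Scope ring_scope.

Lemma mgE s i d : (i.+1 < size s)%N -> mg s i =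
  if mulbp (nth d s i) (nth d s i.+1) is Some c then Some (take i s ++ c :: drop i.+2 s) else None.
Proof.
elim: s i => [|a s IH] [|i] //=.
  by case: s IH => [|b r] //= _ _; rewrite drop0; case: mulbp.
move=> lt; rewrite IH //; case: mulbp => //.
Qed.

Section K.
Variable k : fieldType.

Lemma actL0 (a : bpT) (x : k) : actL (val a) x = 0.
Proof. by bcase a; rewrite /actL /etacoef /= mulr0. Qed.
Lemma actR0 (a : bpT) (x : k) : actR x (val a) = 0.
Proof. by bcase a; rewrite /actR /etacoef /= mulr0. Qed.

Lemma rawdE n (phi : cochain k n) v (t : n.+1.-tuple bpT) :
  rawd phi (v, t) = Dseq (evs phi v) (val t).
Proof.
rewrite /rawd ffunE big1 ?add0r; last by move=> w _; rewrite actL0.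
rewrite actR0 mulr0 addr0 /Dseq size_tuple /=; apply: eq_bigr => i _.
rewrite (mgE (thead t)) ?size_tuple ?ltnS //.
by case: mulbp.
Qed.

Lemma evs_val n (phi : cochain k n) v (t : n.-tuple bpT) : evs phi v (val t) = phi (v, t).
Proof. by rewrite /evs valK. Qed.

Lemma evs_size n (phi : cochain k n) v s : size s != n -> evs phi v s = 0.
Proof. by move=> h; rewrite /evs insubF // (negbTE h). Qed.

Lemma evs_lin n a (phi psi : cochain k n) v s :
  evs (a *: phi + psi) v s = a * evs phi v s + evs psi v s.
Proof. rewrite /evs; case: insubP => [t _ _|_] /=; rewrite ?ffunE ?mulr0 ?addr0 //. Qed.

Lemma Dseq_ext (F G : seq bpT -> k) s :
  (forall i t, mg s i = Some t -> F t = G t) -> Dseq F s = Dseq G s.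
Proof.
move=> h; apply: eq_bigr => i _; case E: (mg s i) => [t|] //=; by rewrite (h _ _ E).
Qed.

Lemma evs_rawd n (phi : cochain k n) v s : evs (rawd phi) v s = Dseq (evs phi v) s.
Proof.
case: (eqVneq (size s) n.+1) => hs.
  by have := rawdE phi v (Tuple (introT eqP hs)); rewrite -evs_val.
rewrite evs_size // /Dseq big1 // => i _; case E: (mg s i) => [t|] /=; last by rewrite mulr0.
have [st lt] := mg_size E; rewrite evs_size ?mulr0 // st.
by move: hs lt; lia.
Qed.

Lemma Dseq_lin a (F G : seq bpT -> k) s :
  Dseq (fun t => a * F t + G t) s = a * Dseq F s + Dseq G s.
Proof.
rewrite /Dseq mulr_sumr -big_split /=; apply: eq_bigr => i _.
by case: (mg s i) => [t|] /=; rewrite ?mulr0 ?addr0 // mulrDr mulrCA.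
Qed.

Lemma projC_is_linear m n : linear (@projC k m n).
Proof.
move=> a phi psi; apply/ffunP=> p; rewrite !ffunE.
by case: ifP => _; rewrite ?scaler0 ?addr0.
Qed.
HB.instance Definition _ (m : int) (n : nat) :=
  GRing.isLinear.Build k (cochain k n) (cochain k n) _ (@projC k m n) (@projC_is_linear m n).

Lemma rawd_is_linear n : linear (@rawd k n).
Proof.
move=> a phi psi; apply/ffunP=> -[v t]; rewrite rawdE.
have -> : (a *: rawd phi + rawd psi) (v,t) = a * rawd phi (v,t) + rawd psi (v,t) by rewrite !ffunE.
rewrite !rawdE.
rewrite -[RHS]Dseq_lin; apply: Dseq_ext => i t' _; exact: evs_lin.
Qed.
HB.instance Definition _ (n : nat) :=
  GRing.isLinear.Build k (cochain k n) (cochain k n.+1) _ (@rawd k n) (@rawd_is_linear n).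

Definition dfn m n (phi : cochain k n) : cochain k n.+1 := projC m (rawd phi).
HB.instance Definition _ (m : int) (n : nat) := GRing.Linear.copy (@dfn m n) (@projC k m n.+1 \o @rawd k n).

Lemma hdiffE m n (phi : cochain k n) : hdiff k m n phi = projC m (rawd phi).
Proof. by rewrite /hdiff; change (linfun (@dfn m n) phi = @dfn m n phi); rewrite lfunE. Qed.

End K.

End C4.
Import C4.

Module C5.
Set Implicit Arguments. Unset Strict Implicit. Unset Printing Implicit Defensive.
Local Open Scope ring_scope.

Section K.
Variable k : fieldType.

Lemma scaleo (a b : k) : (a *: (b : k^o)) = a * b. Proof. by []. Qed.

Section Coord.
Variable n : nat.
Definition proj (P : pred (pathT n)) (phi : cochain k n) : cochain k n :=
  [ffun p => if P p then phi p else 0].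
Lemma proj_is_linear P : linear (proj P).
Proof.
move=> a phi psi; apply/ffunP=> p; rewrite !ffunE.
by case: ifP => _; rewrite ?scaler0 ?addr0.
Qed.
HB.instance Definition _ P :=
  GRing.isLinear.Build k (cochain k n) (cochain k n) _ (proj P) (proj_is_linear P).

Definition dlt (p : pathT n) : cochain k n := [ffun q => (q == p)%:R].
Definition CS (P : pred (pathT n)) : {vspace cochain k n} := <<[seq dlt p | p <- enum P]>>%VS.

Lemma mem_limg_proj P phi : phi \in limg (linfun (proj P)) ->
  forall q, ~~ P q -> phi q = 0.
Proof.
case/memv_imgP => psi _ ->; move=> q hq; rewrite lfunE /= ffunE.
by rewrite (negbTE hq).
Qed.

Lemma span_dlt (l : seq (pathT n)) phi : phi \in <<map dlt l>>%VS ->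
  forall q, q \notin l -> phi q = 0.
Proof.
move=> h q hq; apply: (mem_limg_proj (P := mem l)) => //.
move: phi h; apply/subvP/span_subvP => x /mapP [p pl ->].
have -> : dlt p = linfun (proj (mem l)) (dlt p).
  rewrite lfunE; apply/ffunP => r /=; rewrite !ffunE /=.
  by case: ifP => // rl; case: eqP => // e; rewrite e pl in rl.
exact: memv_img (memvf _).
Qed.

Lemma free_dlt (l : seq (pathT n)) : uniq l -> free (map dlt l).
Proof.
elim: l => [|x l IH] /=; first by rewrite nil_free.
case/andP => xl ul; rewrite free_cons IH // andbT; apply/negP => /span_dlt /(_ x xl).
by rewrite ffunE eqxx => /eqP; rewrite oner_eq0.
Qed.

Lemma dim_CS P : \dim (CS P) = #|P|.
Proof. by have := free_dlt (enum_uniq P); rewrite /free size_map -cardE => /eqP. Qed.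

Lemma CS_limg P : CS P = limg (linfun (proj P)).
Proof.
apply/eqP; rewrite eqEsubv; apply/andP; split.
  apply/span_subvP => x /mapP [p pl ->].
  have -> : dlt p = linfun (proj P) (dlt p).
    rewrite lfunE; apply/ffunP => r /=; rewrite !ffunE /=.
    rewrite mem_enum in pl.
    have Pp : P p := pl.
    by case: eqP => [->|]; [rewrite Pp | case: ifP].
  exact: memv_img (memvf _).
apply/subvP => phi /memv_imgP [psi _ ->]; rewrite lfunE /=.
have -> : proj P psi = \sum_(p <- enum P) psi p *: dlt p.
  apply/ffunP => q; rewrite sum_ffunE ffunE big_enum /=.
  case: ifP => Pq.
    rewrite (bigD1 q) //= big1 ?addr0 => [|p /andP[_ /negbTE pq]].
      by rewrite ffunE ffunE eqxx scaleo mulr1.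
    by rewrite ffunE ffunE eq_sym pq scaleo mulr0.
  rewrite big1 // => p Pp; have Pp' : P p := Pp; rewrite ffunE ffunE scaleo.
  by case: eqP => [e|]; [rewrite e Pp' in Pq | rewrite mulr0].
rewrite big_seq; apply: memv_suml => p Pp; apply: memvZ; apply: memv_span; exact: map_f.
Qed.

Lemma memCS P phi : phi \in CS P -> forall q, ~~ P q -> phi q = 0.
Proof. by rewrite CS_limg; apply: mem_limg_proj. Qed.

End Coord.

Lemma Cspace_CS m n : Cspace k m n = CS (@admissible k m n).
Proof. by rewrite CS_limg. Qed.

End K.

End C5.
Import C5.

Module C6.
Set Implicit Arguments. Unset Strict Implicit. Unset Printing Implicit Defensive.
Local Open Scope ring_scope.

Lemma pathE a s : path (fun a b => rgt a == lft b) a s = cmpR (rgt a) s.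
Proof. by elim: s a => [|b s IH] a //=; rewrite IH eq_sym. Qed.
Lemma lastE v s : last v [seq rgt a | a <- s] = endR v s.
Proof. by elim: s v => [|a s IH] v //=. Qed.

Section K.
Variable k : fieldType.

Definition admS (m : int) (v : vx) (s : seq bpT) : bool :=
  [&& cmpR v s, actR (actL (idem v) (1 : k)) (idem (endR v s)) == 1 & (degs s)%:Z + m == (degM)%:Z].

Lemma admE m n (p : pathT n) : admissible k m p = admS m p.1 (val p.2).
Proof.
case: p => v [s hs]; rewrite /admissible /composable /endv /degp /admS /=.
by case: s hs => [|a s] hs //=; rewrite pathE lastE.
Qed.

Lemma admS_VO m s : admS m VO s = false.
Proof. by rewrite /admS /actL /actR /etacoef /= mulr0 mul0r eq_sym oner_eq0 andbF. Qed.

Lemma admS_mg m v s i t : mg s i = Some t -> admS m v t = admS m v s.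
Proof. by move=> E; have [h1 h2 h3] := mg_pres v E; rewrite /admS h1 h2 h3. Qed.

Lemma admS_size m s : admS m VL s -> (size s <= 2 * `|1 - m|)%N.
Proof.
case/and3P => hc _ /eqP hd; have := size_bound hc; rewrite addn0.
have -> : (1 - m) = (degs s)%:Z by move: hd; rewrite /degM /=; lia.
by rewrite absz_nat.
Qed.

Lemma tri (F : seq bpT -> k) n (Q : pred (seq bpT)) :
  (forall t, F t != 0 -> [/\ isU t, Q t & size t = n]) ->
  (forall u, isU u -> Q u -> size u = n -> Dseq F (mu u) = 0) -> forall t, F t = 0.
Proof.
move=> hS hD.
have bnd t : isU t -> ((pref t).*2 < size t)%N.
  move=> U; have [_ lt] := mg_size (mg_mu U); rewrite mu_size // in lt; lia.
suff: forall d t, (n <= pref t + d)%N -> F t = 0.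
  by move=> h t; apply: (h n); rewrite leq_addl.
elim=> [|d IH] t hd.
  apply/eqP/negP => /negP /hS [U _ st]; have := bnd t U; rewrite st; lia.
case: (leqP n (pref t + d)) => [h|h]; first exact: IH.
apply/eqP/negP => /negP ht; have [U Qt st] := hS _ ht.
have := hD _ U Qt st; rewrite /Dseq mu_size // /=.
have lt : ((pref t).*2 < size t)%N := bnd t U.
rewrite (bigD1 (Ordinal lt)) //= mg_mu //= big1 ?addr0.
  by move/eqP; rewrite mulf_eq0 signr_eq0 (negbTE ht).
move=> i hi; case E: (mg (mu t) i) => [t'|] /=; last by rewrite mulr0.
have hi' : i != (pref t).*2 :> nat by apply: contra hi => /eqP e; apply/eqP/val_inj.
case/orP: (mu_key U hi' E) => [nU|lt'].
  case: (eqVneq (F t') 0) => [->|/hS [U' _ _]]; first by rewrite mulr0.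
  by rewrite U' in nU.
by rewrite IH ?mulr0 //; lia.
Qed.

End K.

End C6.
Import C6.

Module C7.
Set Implicit Arguments. Unset Strict Implicit. Unset Printing Implicit Defensive.
Local Open Scope ring_scope.

Definition tupS n (s : seq bpT) : n.-tuple bpT := insubd (nseq_tuple n Th) s.
Lemma tupSE n s : size s = n -> val (tupS n s) = s.
Proof. by move=> h; rewrite val_insubd h eqxx. Qed.

Section K.
Variable k : fieldType.
Variable m : int.

Definition PU n : pred (pathT n) := fun p => admissible k m p && isU (val p.2).
Definition PW n : pred (pathT n) := fun p => admissible k m p && isW (val p.2).
Definition PK n : pred (pathT n) := fun p => admissible k m p && isK (val p.2).

Arguments PU : clear implicits.
Arguments PW : clear implicits.
Arguments PK : clear implicits.

Lemma CU_inj n : (CS k (PU n) :&: lker (hdiff k m n) = 0)%VS.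
Proof.
apply/eqP; rewrite -subv0; apply/subvP => phi /memv_capP [hU hK]; rewrite memv0.
rewrite memv_ker in hK.
have F0 : forall t, evs phi VL t = 0.
  apply: (@tri k _ n (admS k m VL)).
    move=> t; case: (eqVneq (size t) n) => st; last by rewrite evs_size ?eqxx.
    have -> : t = val (Tuple (introT eqP st)) by [].
    rewrite evs_val => h; case: (boolP (PU n (VL, Tuple (introT eqP st)))) => hp.
      by move: hp; rewrite /PU admE /= => /andP[-> ->].
    by rewrite (memCS hU hp) eqxx in h.
  move=> u U Qu su.
  have smu : size (mu u) = n.+1 by rewrite mu_size // su.
  have := eqP hK; rewrite hdiffE => /ffunP /(_ (VL, tupS n.+1 (mu u))).
  rewrite ffunE admE /= tupSE // -(admS_mg k m VL (mg_mu U)) Qu rawdE tupSE //.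
  by rewrite ffunE.
apply/eqP/ffunP => -[v t]; rewrite ffunE; case: v.
  by rewrite -evs_val F0.
apply: (memCS hU); by rewrite /PU admE /= admS_VO.
Qed.


Lemma card_part n : #|@admissible k m n| = (#|PU n| + #|PW n| + #|PK n|)%N.
Proof.
rewrite -!sum1_card !(big_mkcond (fun p => p \in _)) -!big_split /=.
apply: eq_bigr => p _.
have e : forall (P : pred (pathT n)), (p \in P) = P p by [].
rewrite !e /PU /PW /PK /isK.
case: (admissible k m p) => //=; case hU: isU => /=.
  by rewrite (negbTE (UnW hU)).
by case: isW.
Qed.

Definition fmu n (p : pathT n) : pathT n.+1 := (p.1, tupS n.+1 (mu (val p.2))).

Lemma card_W n : #|PW n.+1| = #|PU n|.
Proof.
have inj : {in PU n &, injective (@fmu n)}.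
  move=> [v1 t1] [v2 t2]; rewrite !unfold_in /PU /fmu /= => /andP[_ U1] /andP[_ U2] [-> E].
  congr pair; apply: val_inj => /=; rewrite -(nu_mu U1) -(nu_mu U2).
  by have := congr1 val E; rewrite !tupSE ?mu_size ?size_tuple // => ->.
rewrite -(card_in_imset inj); apply: eq_card => w; apply/idP/imsetP.
  case: w => v t; rewrite unfold_in /PW admE /= => /andP[adm W].
  have [cv _] := andP adm.
  have [U mnu] := nu_W cv W.
  have snu : size (nu (val t)) = n.
    by have := size_tuple t; rewrite -mnu mu_size // => /eqP; rewrite eqSS => /eqP.
  exists (v, tupS n (nu (val t))).
    rewrite unfold_in /PU admE /= tupSE // U andbT.
    by rewrite (admS_mg k m v (mg_mu U)) mnu.
  congr pair; apply: val_inj => /=; by rewrite (tupSE snu) mnu tupSE // size_tuple.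
case=> -[v t] Pp ->; move: Pp; rewrite !unfold_in /PU /PW /fmu !admE /= => /andP[adm U].
have smu : size (mu (val t)) = n.+1 by rewrite mu_size // size_tuple.
rewrite tupSE // -(admS_mg k m v (mg_mu U)) adm /=; by case: (mu_W U).
Qed.

Lemma card_K n : #|PK n| = admS k m VL (crit VL n) :> nat.
Proof.
pose pc : pathT n := (VL, tupS n (crit VL n)).
have [sz cm kk] := crit_ok n VL.
have un : forall p, p \in PK n -> p = pc.
  move=> [v t]; rewrite unfold_in /PK admE /= => /andP[adm K].
  case: v adm => adm; last by rewrite admS_VO in adm.
  congr pair; apply: val_inj => /=; rewrite tupSE //; have [cv _] := andP adm.
  by rewrite (crit_uniq cv K) size_tuple.
case: (boolP (admS k m VL (crit VL n))) => h.
  apply: (@eq_card1 _ pc) => p; apply/idP/eqP => [/un //|->].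
  by rewrite unfold_in /PK admE /= tupSE // h.
apply: eq_card0 => p; apply/negP => /[dup] /un -> .
by rewrite unfold_in /PK admE /= tupSE // (negbTE h).
Qed.

End K.

End C7.
Import C7.

Module C8.
Set Implicit Arguments. Unset Strict Implicit. Unset Printing Implicit Defensive.
Local Open Scope ring_scope.

Definition sh (x : nat -> nat) (i : nat) : nat := if i is j.+1 then x j else 0%N.

Lemma telesc (x : nat -> nat) M :
  \sum_(i < M.+1) (-1) ^+ i * ((x i)%:Z + (sh x i)%:Z) = (-1) ^+ M * (x M)%:Z.
Proof.
elim: M => [|M IH]; first by rewrite big_ord_recr big_ord0 /= add0r addr0.
rewrite big_ord_recr /= IH /= exprS; ring.
Qed.

Lemma euler (d u b r : nat -> nat) N n :
  (forall i, d i = u i + sh u i + b i)%N ->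
  (forall i, u i <= r i)%N ->
  (forall i, r i + sh r i <= d i)%N ->
  (forall i, N <= i -> d i = 0)%N ->
  (forall i, b i <= 1)%N ->
  (forall i j, b i = 1%N -> b j = 1%N -> i = j) ->
  ((d n - r n) - sh r n)%N = b n.
Proof.
move=> H1 H2 H3 H4 H5 H6.
have hle : forall i, ((d i - r i) - sh r i <= b i)%N.
  move=> i; have := H1 i; have := H2 i; have := H3 i.
  case: i => [|i] /=; first by lia.
  by have := H2 i; lia.
have := hle n; have := H5 n; case E: (b n) => [|[|]] //; first by lia.
move=> _ h.
have hz : forall i, i != n -> ((d i - r i) - sh r i = 0)%N.
  move=> i ni; have := hle i; have := H5 i; case Ei: (b i) => [|[|]] //; first by lia.
  by rewrite (H6 _ _ Ei E) eqxx in ni.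
case: (ltnP 0 ((d n - r n) - sh r n)) => [h0|h0]; first by lia.
exfalso.
pose M := (N + n)%N.
have dM : d M = 0%N by apply: H4; rewrite leq_addr.
have rM : r M = 0%N by have := H3 M; rewrite dM; lia.
have uM : u M = 0%N by have := H2 M; lia.
have e1 : \sum_(i < M.+1) (-1) ^+ i * ((d i)%:Z - (r i)%:Z - (sh r i)%:Z) = 0.
  rewrite big1 // => j _.
  suff -> : (d j)%:Z - (r j)%:Z - (sh r j)%:Z = 0 by rewrite mulr0.
  case: (eqVneq (j : nat) n) => [->|nj].
    have := H3 n; move: h0; case: (n) => [|n'] /=; lia.
  have := hz j nj; have := H3 j; case: (j : nat) => [|j'] /=; lia.
have e2 : \sum_(i < M.+1) (-1) ^+ i * ((d i)%:Z - (r i)%:Z - (sh r i)%:Z) =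
          \sum_(i < M.+1) (-1) ^+ i * (b i)%:Z.
  have : \sum_(i < M.+1) (-1) ^+ i * ((d i)%:Z - (r i)%:Z - (sh r i)%:Z) =
     \sum_(i < M.+1) (-1) ^+ i * (d i)%:Z - \sum_(i < M.+1) (-1) ^+ i * ((r i)%:Z + (sh r i)%:Z).
    rewrite -sumrB; apply: eq_bigr => i _; ring.
  move=> ->; rewrite telesc rM mulr0 subr0.
  have : \sum_(i < M.+1) (-1) ^+ i * (d i)%:Z =
    \sum_(i < M.+1) (-1) ^+ i * ((u i)%:Z + (sh u i)%:Z) + \sum_(i < M.+1) (-1) ^+ i * (b i)%:Z.
    rewrite -big_split; apply: eq_bigr => i _; by rewrite H1 !PoszD /= mulrDr.
  by move=> ->; rewrite telesc uM mulr0 add0r.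
have e3 : \sum_(i < M.+1) (-1) ^+ i * (b i)%:Z = (-1) ^+ n.
  have nM : (n < M.+1)%N by rewrite ltnS leq_addl.
  rewrite (bigD1 (Ordinal nM)) //= E mulr1 big1 ?addr0 // => i ni.
  have ni' : (i : nat) != n by apply: contra ni => /eqP e; apply/eqP/val_inj.
  have := H5 i; case Ei: (b i) => [|[|]] //; first by rewrite mulr0.
  by rewrite (H6 _ _ Ei E) eqxx in ni'.
by move: e1; rewrite e2 e3 => /eqP; rewrite signr_eq0.
Qed.

End C8.
Import C8.

Module C9.
Set Implicit Arguments. Unset Strict Implicit. Unset Printing Implicit Defensive.
Local Open Scope ring_scope.

Section K.
Variable k : fieldType.
Variable m : int.

Lemma d2 n (phi : cochain k n) : hdiff k m n.+1 (hdiff k m n phi) = 0.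
Proof.
apply/ffunP => -[v t]; rewrite hdiffE ffunE [RHS]ffunE; case: ifP => adm //.
rewrite rawdE hdiffE.
transitivity (Dseq (Dseq (evs phi v)) (val t)); last exact: Dseq2.
apply: Dseq_ext => i t' E.
case: (eqVneq (size t') n.+1) => st; last by rewrite evs_size // -evs_rawd evs_size.
rewrite -[t']/(val (Tuple (introT eqP st))) evs_val ffunE.
rewrite admE /= (admS_mg k m v E); move: adm; rewrite admE /= => ->.
by rewrite rawdE.
Qed.

Definition dd n := #|@admissible k m n|.
Definition uu n := #|@PU k m n|.
Definition rr n := \dim (hdiff k m n @: Cspace k m n).
Definition bb n : nat := admS k m VL (crit VL n).

Lemma dimC n : \dim (Cspace k m n) = dd n.
Proof. by rewrite Cspace_CS dim_CS. Qed.

Lemma r_ge n : (uu n <= rr n)%N.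
Proof.
rewrite /uu -(dim_CS k) -(limg_dim_eq (CU_inj k m n)); apply/dimvS/limgS.
rewrite Cspace_CS; apply/span_subvP => x /mapP [p pl ->]; apply: memv_span.
apply: map_f; move: pl; rewrite !mem_enum unfold_in /PU => /andP[] //.
Qed.

Lemma dimZ n : \dim (Zspace k m n) = (dd n - rr n)%N.
Proof. by rewrite -dimC -(limg_ker_dim (hdiff k m n) (Cspace k m n)) addnK. Qed.

Lemma r_le n : (rr n <= dd n)%N.
Proof. by rewrite -dimC -(limg_ker_dim (hdiff k m n) (Cspace k m n)) leq_addl. Qed.

Lemma BZ n : (Bspace k m n.+1 <= Zspace k m n.+1)%VS.
Proof.
apply/subvP => x /memv_imgP [phi _ ->]; rewrite memv_cap; apply/andP; split.
  rewrite hdiffE /Cspace; have <- := lfunE (@projC k m n.+1) (rawd phi).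
  exact: memv_img (memvf _).
by rewrite memv_ker d2.
Qed.

Lemma HH_euler n : HHdim k m n = ((dd n - rr n) - sh rr n)%N.
Proof.
rewrite /HHdim dimZ; case: n => [|n] /=; first by rewrite dimv0.
by [].
Qed.

End K.

End C9.
Import C9.

Module C10.
Set Implicit Arguments. Unset Strict Implicit. Unset Printing Implicit Defensive.


Lemma crit_formula q r : (r < 4)%N ->
  endR VL (crit VL (r + 4 * q)) = endR VL (crit VL r) /\
  degs (crit VL (r + 4 * q)) = (3 * q + degs (crit VL r))%N.
Proof.
move=> _; elim: q => [|q [IH1 IH2]]; first by rewrite muln0 addn0.
have -> : (r + 4 * q.+1 = (r + 4 * q).+4)%N by lia.
rewrite /= IH1; split => //.
rewrite /degs !big_cons -/(degs _) IH2 /= -/(degs (crit VL r)); lia.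
Qed.

Section K.
Variable k : fieldType.

Lemma bb_char m n : admS k m VL (crit VL n) =
  ((n %% 4 == 1) && (((3 * (n %/ 4) + 1)%:Z + m)%R == 1%R)) ||
  ((n %% 4 == 2) && (((3 * (n %/ 4) + 2)%:Z + m)%R == 1%R)).
Proof.
rewrite /admS; have [_ -> _] := crit_ok n VL.
have lt := ltn_pmod n (isT : (0 < 4)%N).
rewrite {1 2}(divn_eq n 4) addnC mulnC; have [-> ->] := crit_formula (n %/ 4) lt.
have z : ((0 : k) == 1)%R = false by rewrite eq_sym oner_eq0.
move: lt; case: (n %% 4) => [|[|[|[|r]]]] //= _;
 rewrite /actR /actL /etacoef /= ?mulr1 ?mul1r ?oner_eq0 ?eqxx /degs ?big_cons ?big_nil /= ?addn0 ?addn1 ?addn2 ?z ?orbF //.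
Qed.

Lemma HH_main m n : HHdim k m n = bb k m n.
Proof.
rewrite HH_euler; apply: (@euler (dd k m) (uu k m) (bb k m) (rr k m) (2 * `|1 - m|).+1).
- move=> i; rewrite /dd /uu card_part card_K; congr (_ + _)%N; congr (_ + _)%N.
  case: i => [|i] /=; last exact: card_W.
  apply: eq_card0 => -[v t]; rewrite unfold_in /PW.
  have -> : val t = [::] by apply/nilP; rewrite /nilp size_tuple.
  by rewrite andbF.
- exact: r_ge.
- case=> [|i] /=; first by rewrite addn0 r_le.
  have := dimvS (BZ k m i); rewrite dimZ -[\dim (Bspace _ _ _)]/(rr k m i) => h; have := r_le k m i.+1; lia.
- move=> i hi; apply: eq_card0 => -[v t]; apply: negbTE.
  have -> : ((v,t) \in @admissible k m i) = admissible k m (v,t) by [].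
  rewrite admE /=; case: v; last by rewrite admS_VO.
  apply/negP; move/admS_size; rewrite size_tuple; lia.
- by move=> i; rewrite /bb leq_b1.
- move=> i j; rewrite /bb !bb_char.
  have b1P : forall b : bool, (b : nat) = 1%N -> b by case.
  move=> /b1P hi /b1P hj.
  have ei := divn_eq i 4; have ej := divn_eq j 4.
  have li := ltn_pmod i (isT : (0 < 4)%N); have lj := ltn_pmod j (isT : (0 < 4)%N).
  move: hi hj; set qi := i %/ 4; set ri := i %% 4; set qj := j %/ 4; set rj := j %% 4.
  move=> /orP[/andP[/eqP ri1 /eqP hi]|/andP[/eqP ri2 /eqP hi]]
         /orP[/andP[/eqP rj1 /eqP hj]|/andP[/eqP rj2 /eqP hj]]; lia.
Qed.

End K.

End C10.
Import C10.

Module C11.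
Set Implicit Arguments. Unset Strict Implicit. Unset Printing Implicit Defensive.

Lemma fam (k : fieldType) (c n : nat) : (0 < c)%N ->
  admS k (c%:Z - n%:Z)%R VL (crit VL n) = (n == 4 * c - 3) || (n == 4 * c - 2).
Proof.
move=> c0; rewrite bb_char.
have e := divn_eq n 4; have l := ltn_pmod n (isT : (0 < 4)%N).
apply/idP/idP.
  case/orP => /andP[/eqP r /eqP h].
    have -> : n = (4 * c - 3)%N by lia.
    by rewrite eqxx.
  have -> : n = (4 * c - 2)%N by lia.
  by rewrite eqxx orbT.
case/orP => /eqP hn.
  apply/orP; left; apply/andP; split; apply/eqP; lia.
apply/orP; right; apply/andP; split; apply/eqP; lia.
Qed.

End C11.
Import C11.
Unset Implicit Arguments.
Local Open Scope ring_scope.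

Theorem mainTheorem6 (k : fieldType)
    (h2 : (2 \notin [pchar k])%N) (h3 : (3 \notin [pchar k])%N) :
  (forall n : nat, HHdim k (1 - n%:Z) n = (if n \in [:: 1; 2] then 1 else 0)%N) /\
  (forall n : nat, HHdim k (2 - n%:Z) n = (if n \in [:: 5; 6] then 1 else 0)%N) /\
  (forall n : nat, HHdim k (3 - n%:Z) n = (if n \in [:: 9; 10] then 1 else 0)%N) /\
  (forall n : nat, HHdim k (4 - n%:Z) n = (if n \in [:: 13; 14] then 1 else 0)%N).
Proof.
split; [|split; [|split]] => n; rewrite HH_main /bb.
- by rewrite (@fam k 1 n) // !inE; case: ifP.
- by rewrite (@fam k 2 n) // !inE; case: ifP.
- by rewrite (@fam k 3 n) // !inE; case: ifP.
- by rewrite (@fam k 4 n) // !inE; case: ifP.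
Qed.
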